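(* Let $n\ge0$ and let $k,k_0,k_1,\dots,k_n$ be integers with $k_0,\dots,k_n\neq0$. Then $$\Big|\int_{-\pi}^{\pi}\frac{\sin(k\beta/2)}{2\sin(\beta/2)}\prod_{j=0}^{n}\frac{\sin(k_j\beta/2)}{k_j\sin(\beta/2)}\,d\beta\Big|\le4,\qquad \Big|\int_{-\pi}^{\pi}\frac{\cos(\beta/2)\sin(k\beta/2)}{2\sin(\beta/2)}\prod_{j=0}^{n}\frac{\sin(k_j\beta/2)}{k_j\sin(\beta/2)}\,d\beta\Big|\le\frac{10}{3}.$$ *)

(* Defs.v *)
From Stdlib Require Import Reals.
From Coquelicot Require Import Coquelicot.
Open Scope R_scope.

Fixpoint prod_upto (f : nat -> R) (n : nat) : R :=
  match n with
  | O => f O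
  | S m => prod_upto f m * f (S m)
  end.

Definition dfac (m : Z) (b : R) : R :=
  sin (IZR m * b / 2) / (IZR m * sin (b / 2)).

(* Main.v *)
Require Import Defs.
From Stdlib Require Import Reals ZArith Lra Lia List.
From Coquelicot Require Import Coquelicot.
Open Scope R_scope.


Lemma PI_ub : PI <= 10/3.
Proof. destruct (PI_ineq 3) as [_ H]. unfold tg_alt, PI_tg in H. simpl in H. lra. Qed.

Fixpoint Palt (a : nat -> R) (n : nat) : R :=
  match n with O => 0 | S n' => a O - Palt (fun i => a (S i)) n' end.

Lemma Palt_bound : forall n a, (forall i, 0 <= a i) -> (forall i, a (S i) <= a i) ->
  0 <= Palt a n <= a O.
Proof.
  induction n; intros a H0 H1; simpl. specialize (H0 O); lra.
  destruct (IHn (fun i => a (S i))) as [A B]; auto.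
  specialize (H1 O). lra.
Qed.

Lemma Palt_step : forall n a, Palt a (S n) - Palt a n = (-1)^n * a n.
Proof.
  induction n; intros a. simpl. ring.
  change (Palt a (S (S n))) with (a O - Palt (fun i => a (S i)) (S n)).
  change (Palt a (S n)) with (a O - Palt (fun i => a (S i)) n).
  specialize (IHn (fun i => a (S i))). cbv beta in IHn.
  replace (a 0%nat - Palt (fun i => a (S i)) (S n) - (a 0%nat - Palt (fun i => a (S i)) n))
    with (- (Palt (fun i => a (S i)) (S n) - Palt (fun i => a (S i)) n)) by ring.
  rewrite IHn. simpl. ring.
Qed.

Lemma Palt_pair : forall n a, (forall i, 0 <= a i) -> (forall i, a (S i) <= a i) ->
  (forall i, 2 * a (S i) <= a i + a (S (S i))) ->
  a O <= Palt a n + Palt a (S n) <= 2 * a O - a 1%nat.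
Proof.
  induction n; intros a H0 H1 H2.
  simpl. specialize (H1 O). lra.
  change (Palt a (S (S n))) with (a O - Palt (fun i => a (S i)) (S n)).
  change (Palt a (S n)) with (a O - Palt (fun i => a (S i)) n).
  destruct (IHn (fun i => a (S i))) as [A B]; auto.
  specialize (H2 O). lra.
Qed.

Definition aa (i : nat) : R := 4 / (2 * INR i + 1).
Definition P (n : nat) : R := Palt aa n.

Lemma aa_pos : forall i, 0 <= aa i.
Proof. intros; unfold aa. pose proof (pos_INR i). apply Rlt_le, Rdiv_lt_0_compat; lra. Qed.
Lemma aa_dec : forall i, aa (S i) <= aa i.
Proof. intros; unfold aa. rewrite S_INR. pose proof (pos_INR i).
  apply Rmult_le_compat_l; [lra|]. apply Rinv_le_contravar; lra. Qed.
Lemma aa_conv : forall i, 2 * aa (S i) <= aa i + aa (S (S i)).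
Proof. intros; unfold aa. rewrite !S_INR. pose proof (pos_INR i).
  set (x := 2 * INR i + 1).
  replace (2 * (INR i + 1) + 1) with (x + 2) by (unfold x; ring).
  replace (2 * (INR i + 1 + 1) + 1) with (x + 4) by (unfold x; ring).
  assert (0 < x) by (unfold x; lra).
  apply Rminus_le_0.
  replace (4 / x + 4 / (x + 4) - 2 * (4 / (x + 2))) with (32 / (x * (x+2) * (x+4))) by (field; lra).
  apply Rlt_le, Rdiv_lt_0_compat; [lra|]. apply Rmult_lt_0_compat; [apply Rmult_lt_0_compat|]; lra.
Qed.

Lemma P_bound : forall n, 0 <= P n <= 4.
Proof. intros. unfold P. pose proof (Palt_bound n aa aa_pos aa_dec). 
  replace (aa 0) with 4 in H by (unfold aa; simpl; field). exact H. Qed.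

Lemma P_pair : forall n, 0 <= P n + P (S n) <= 20/3.
Proof. intros. unfold P. pose proof (Palt_pair n aa aa_pos aa_dec aa_conv).

  replace (aa 0) with 4 in H by (unfold aa; simpl; field).
  replace (aa 1) with (4/3) in H by (unfold aa; simpl; field). lra. Qed.

Lemma P_step : forall n, P (S n) - P n = (-1)^n * aa n.
Proof. intros; apply Palt_step. Qed.

Definition h (t : Z) : R :=
  if Z.eq_dec t 0 then 2 * PI else 4 * sin (IZR t * PI / 2) / IZR t.

Definition F (t : Z) : R :=
  if Z.even t then (if Z.leb 0 t then PI else - PI)
  else (if Z.ltb 0 t then P (Z.to_nat ((t + 1) / 2)) else - P (Z.to_nat ((- t - 1) / 2))).

Lemma sin_odd : forall n : nat, sin ((2 * INR n + 1) * PI / 2) = (-1)^n.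
Proof.
  induction n. simpl. replace ((2*0+1)*PI/2) with (PI/2) by field. apply sin_PI2.
  rewrite S_INR. replace ((2 * (INR n + 1) + 1) * PI / 2) with ((2 * INR n + 1) * PI / 2 + PI) by field.
  rewrite neg_sin, IHn. simpl. ring.
Qed.

Lemma div2_lem : forall q : Z, ((2 * q + 2) / 2 = q + 1)%Z.
Proof. intros. replace (2*q+2)%Z with ((q+1)*2)%Z by ring. apply Z.div_mul. lia. Qed.

Lemma Zeven_2 : forall q, Z.even (2 * q) = true.
Proof. intros. rewrite Z.even_mul. reflexivity. Qed.
Lemma Zeven_2_1 : forall q, Z.even (2 * q + 1) = false.
Proof. intros. rewrite Z.even_add, Z.even_mul. reflexivity. Qed.

Lemma Z_cases : forall t : Z,
  (exists q, t = 2 * q)%Z \/ (exists n : nat, t = 2 * Z.of_nat n + 1)%Z \/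
  (exists n : nat, t = - (2 * Z.of_nat n + 1))%Z.
Proof.
  intros t. destruct (Z.Even_or_Odd t) as [[q Hq]|[q Hq]]. left; eauto.
  right. destruct (Z_le_gt_dec 0%Z q).
  left. exists (Z.to_nat q). rewrite Z2Nat.id; lia.
  right. exists (Z.to_nat (- q - 1)). rewrite Z2Nat.id; lia.
Qed.

Lemma h_even : forall t, h (- t) = h t.
Proof.
  intros t. unfold h. destruct (Z.eq_dec (-t) 0); destruct (Z.eq_dec t 0); try lia. auto.
  rewrite opp_IZR. replace (- IZR t * PI / 2) with (- (IZR t * PI / 2)) by lra.
  rewrite sin_neg. assert (IZR t <> 0) by (apply not_0_IZR; auto).
  set (u := IZR t) in *. set (v := sin (u * PI / 2)). field. auto.
Qed.

Lemma F_step : forall t, F t - F (t - 2) = h t.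
Proof.
  intros t. destruct (Z_cases t) as [[q ->]|[[n ->]|[n ->]]].
  - unfold F, h. replace (2 * q - 2)%Z with (2 * (q - 1))%Z by ring. rewrite !Zeven_2.
    destruct (Z.eq_dec (2*q) 0).
    + assert (q = 0%Z) by lia. subst. simpl. ring.
    + rewrite sin_eq_0_1. 2:{ exists q. rewrite mult_IZR. field. }
      destruct (Z.leb_spec 0 (2*q)); destruct (Z.leb_spec 0 (2*(q-1))); try lia; field; apply not_0_IZR; auto.
  - unfold F, h.
    replace (2 * Z.of_nat n + 1 - 2)%Z with (2 * (Z.of_nat n - 1) + 1)%Z by ring.
    rewrite !Zeven_2_1.
    destruct (Z.eq_dec (2 * Z.of_nat n + 1) 0); [lia|].
    replace (IZR (2 * Z.of_nat n + 1)) with (2 * INR n + 1)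
      by (rewrite plus_IZR, mult_IZR, <- INR_IZR_INZ; reflexivity).
    rewrite sin_odd.
    destruct (Z.ltb_spec 0 (2 * Z.of_nat n + 1)); [|lia].
    replace (2 * Z.of_nat n + 1 + 1)%Z with (2 * Z.of_nat n + 2)%Z by ring.
    rewrite div2_lem.
    replace (Z.to_nat (Z.of_nat n + 1)) with (S n) by lia.
    destruct n as [|n].
    + simpl. unfold P. simpl. unfold aa. simpl. field.
    + destruct (Z.ltb_spec 0 (2 * (Z.of_nat (S n) - 1) + 1)); [|lia].
      replace (2 * (Z.of_nat (S n) - 1) + 1 + 1)%Z with (2 * Z.of_nat n + 2)%Z by lia.
      rewrite div2_lem. replace (Z.to_nat (Z.of_nat n + 1)) with (S n) by lia.
      rewrite P_step. unfold aa. field. pose proof (pos_INR (S n)). lra.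
  - unfold F, h.
    replace (- (2 * Z.of_nat n + 1) - 2)%Z with (- (2 * Z.of_nat (S n) + 1))%Z by lia.
    replace (Z.even (- (2 * Z.of_nat n + 1))) with false by (rewrite Z.even_opp, Zeven_2_1; auto).
    replace (Z.even (- (2 * Z.of_nat (S n) + 1))) with false by (rewrite Z.even_opp, Zeven_2_1; auto).
    destruct (Z.eq_dec (- (2 * Z.of_nat n + 1)) 0); [lia|].
    replace (IZR (- (2 * Z.of_nat n + 1))) with (- (2 * INR n + 1))
      by (rewrite opp_IZR, plus_IZR, mult_IZR, <- INR_IZR_INZ; reflexivity).
    replace (- (2 * INR n + 1) * PI / 2) with (- ((2 * INR n + 1) * PI / 2)) by field.
    rewrite sin_neg, sin_odd.
    destruct (Z.ltb_spec 0 (- (2 * Z.of_nat n + 1))); [lia|].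
    destruct (Z.ltb_spec 0 (- (2 * Z.of_nat (S n) + 1))); [lia|].
    replace (- - (2 * Z.of_nat n + 1) - 1)%Z with (Z.of_nat n * 2)%Z by lia.
    replace (- - (2 * Z.of_nat (S n) + 1) - 1)%Z with (Z.of_nat (S n) * 2)%Z by lia.
    rewrite !Z.div_mul by lia. rewrite !Nat2Z.id.
    pose proof (P_step n) as HP. unfold aa in HP.
    replace (- P n - - P (S n)) with (P (S n) - P n) by lra. rewrite HP.
    field. pose proof (pos_INR n). lra.
Qed.

Lemma F_bound : forall t, Rabs (F t) <= 4.
Proof.
  intros t. pose proof PI_4. pose proof PI_RGT_0. unfold F.
  destruct (Z.even t); [destruct (0 <=? t)%Z|destruct (0 <? t)%Z];
  [rewrite Rabs_right by lra; lra | rewrite Rabs_left by lra; lra | |];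
  match goal with |- context [P ?m] => pose proof (P_bound m) end;
  [rewrite Rabs_right by lra | rewrite Rabs_left1 by lra]; lra.
Qed.

Definition E (t : Z) : R := F (t + 1) + F (t - 1).

Lemma E_bound : forall t, Rabs (E t) <= 20/3.
Proof.
  intros t. pose proof PI_ub. pose proof PI_RGT_0. unfold E, F.
  destruct (Z_cases t) as [[q ->]|[[n ->]|[n ->]]].
  - replace (2 * q - 1)%Z with (2 * (q - 1) + 1)%Z by ring. rewrite !Zeven_2_1.
    destruct (Z_le_gt_dec 0%Z q).
    + destruct (Z.ltb_spec 0 (2*q+1)); [|lia].
      replace (2*q+1+1)%Z with (2*q+2)%Z by ring. rewrite div2_lem.
      destruct (Z.ltb_spec 0 (2*(q-1)+1)).
      * replace (2*(q-1)+1+1)%Z with (2*(q-1)+2)%Z by ring. rewrite div2_lem.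
        replace (Z.to_nat (q+1)) with (S (Z.to_nat (q - 1 + 1))) by lia.
        pose proof (P_pair (Z.to_nat (q-1+1))). rewrite Rabs_right; lra.
      * assert (q = 0%Z) by lia. subst. simpl.
        pose proof (P_pair 0). simpl in H2. unfold P in *. simpl in *. rewrite Rabs_right; lra.
    + destruct (Z.ltb_spec 0 (2*q+1)); [lia|].
      destruct (Z.ltb_spec 0 (2*(q-1)+1)); [lia|].
      replace (- (2 * q + 1) - 1)%Z with ((-q - 1) * 2)%Z by ring.
      replace (- (2 * (q-1) + 1) - 1)%Z with ((-q) * 2)%Z by ring.
      rewrite !Z.div_mul by lia.
      replace (Z.to_nat (-q)) with (S (Z.to_nat (-q-1))) by lia.
      pose proof (P_pair (Z.to_nat (-q-1))). rewrite Rabs_left1; lra.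
  - replace (2 * Z.of_nat n + 1 + 1)%Z with (2 * (Z.of_nat n + 1))%Z by ring.
    replace (2 * Z.of_nat n + 1 - 1)%Z with (2 * Z.of_nat n)%Z by ring.
    rewrite !Zeven_2.
    destruct (Z.leb_spec 0 (2 * (Z.of_nat n + 1))); [|lia].
    destruct (Z.leb_spec 0 (2 * Z.of_nat n)); [|lia]. rewrite Rabs_right; lra.
  - replace (- (2 * Z.of_nat n + 1) + 1)%Z with (2 * (- Z.of_nat n))%Z by ring.
    replace (- (2 * Z.of_nat n + 1) - 1)%Z with (2 * (- Z.of_nat n - 1))%Z by ring.
    rewrite !Zeven_2.
    destruct (Z.leb_spec 0 (2 * (- Z.of_nat n - 1))); [lia|].
    destruct (Z.leb_spec 0 (2 * - Z.of_nat n)).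
    + replace (PI + - PI) with 0 by ring. rewrite Rabs_R0; lra.
    + rewrite Rabs_left; lra.
Qed.

Lemma E_step : forall t, E t - E (t - 2) = h (t + 1) + h (t - 1).
Proof.
  intros. unfold E. rewrite <- (F_step (t+1)), <- (F_step (t-1)).
  replace (t + 1 - 2)%Z with (t - 1)%Z by ring.
  replace (t - 2 + 1)%Z with (t - 1)%Z by ring.
  replace (t - 2 - 1)%Z with (t - 1 - 2)%Z by ring. ring.
Qed.

Definition tp (l : list (R * Z)) (b : R) : R :=
  fold_right (fun pa acc => fst pa * cos (IZR (snd pa) * b / 2) + acc) 0 l.
Definition Hs (g : Z -> R) (l : list (R * Z)) : R :=
  fold_right (fun pa acc => fst pa * g (snd pa) + acc) 0 l.
Definition nonneg (l : list (R * Z)) := List.Forall (fun pa => 0 <= fst pa) l.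
Fixpoint Dl (a : Z) (m : nat) : list (R * Z) :=
  match m with O => nil | S m' => (1, a) :: Dl (a - 2)%Z m' end.
Definition scale (w : R) (l : list (R * Z)) := map (fun pa => (w * fst pa, snd pa)) l.
Definition mul (A B : list (R * Z)) : list (R * Z) :=
  flat_map (fun pa => flat_map (fun qb =>
     (fst pa * fst qb / 2, (snd pa + snd qb)%Z) :: (fst pa * fst qb / 2, (snd pa - snd qb)%Z) :: nil) B) A.

Lemma tp_app : forall l1 l2 b, tp (l1 ++ l2) b = tp l1 b + tp l2 b.
Proof. induction l1; intros; simpl. ring. unfold tp in *. simpl. rewrite IHl1. ring. Qed.
Lemma Hs_app : forall g l1 l2, Hs g (l1 ++ l2) = Hs g l1 + Hs g l2.
Proof. induction l1; intros; simpl. ring. unfold Hs in *. simpl. rewrite IHl1. ring. Qed.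

Lemma cos_prod : forall s t b, cos (IZR s * b / 2) * cos (IZR t * b / 2) =
  (cos (IZR (s + t) * b / 2) + cos (IZR (s - t) * b / 2)) / 2.
Proof.
  intros. rewrite plus_IZR, minus_IZR.
  replace ((IZR s + IZR t) * b / 2) with (IZR s * b / 2 + IZR t * b / 2) by lra.
  replace ((IZR s - IZR t) * b / 2) with (IZR s * b / 2 - IZR t * b / 2) by lra.
  rewrite cos_plus, cos_minus. lra.
Qed.

Lemma tp_mul : forall A B b, tp (mul A B) b = tp A b * tp B b.
Proof.
  induction A as [|[p s] A IH]; intros B b. simpl. unfold tp; simpl; ring.
  unfold mul. simpl. rewrite tp_app. fold (mul A B). rewrite IH.
  replace (tp ((p, s) :: A) b) with (p * cos (IZR s * b / 2) + tp A b) by reflexivity.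
  assert (forall B, tp (flat_map (fun qb => (p * fst qb / 2, (s + snd qb)%Z)
     :: (p * fst qb / 2, (s - snd qb)%Z) :: nil) B) b = p * cos (IZR s * b / 2) * tp B b).
  { induction B0 as [|[q t] B0 IHB]. unfold tp; simpl; ring.
    simpl. unfold tp in *. simpl in *. rewrite IHB.
    pose proof (cos_prod s t b). set (cs := cos (IZR s * b / 2)) in *.
    set (ct := cos (IZR t * b / 2)) in *.
    set (c1 := cos (IZR (s + t) * b / 2)) in *. set (c2 := cos (IZR (s - t) * b / 2)) in *.
    set (r := fold_right (fun pa acc => fst pa * cos (IZR (snd pa) * b / 2) + acc) 0 B0).
    replace (p * q / 2 * c1 + (p * q / 2 * c2 + p * cs * r)) with (p * q * ((c1 + c2)/2) + p * cs * r) by field.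
    rewrite <- H. ring. }
  rewrite H. ring.
Qed.

Lemma Hs_mul : forall g A B, Hs g (mul A B) =
  Hs (fun s => Hs (fun t => (g (s + t)%Z + g (s - t)%Z) / 2) B) A.
Proof.
  induction A as [|[p s] A IH]; intros B. reflexivity.
  unfold mul. simpl. rewrite Hs_app. fold (mul A B). rewrite IH.
  replace (Hs (fun s0 => Hs (fun t => (g (s0 + t)%Z + g (s0 - t)%Z) / 2) B) ((p, s) :: A))
   with (p * Hs (fun t => (g (s + t)%Z + g (s - t)%Z) / 2) B +
         Hs (fun s0 => Hs (fun t => (g (s0 + t)%Z + g (s0 - t)%Z) / 2) B) A) by reflexivity.
  f_equal.
  induction B as [|[q t] B IHB]. unfold Hs; simpl; ring.
  simpl. unfold Hs in *. simpl in *. rewrite IHB. field.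
Qed.

Lemma Hs_ext : forall f g l, (forall s, f s = g s) -> Hs f l = Hs g l.
Proof. induction l as [|[p s] l IH]; intros; simpl. auto. unfold Hs in *; simpl. rewrite H, IH; auto. Qed.

Lemma Hs_lin : forall f g al be l,
  Hs (fun s => al * f s + be * g s) l = al * Hs f l + be * Hs g l.
Proof. induction l as [|[p s] l IH]; unfold Hs in *; simpl. ring. rewrite IH. ring. Qed.

Lemma Hs_scale : forall g w l, Hs g (scale w l) = w * Hs g l.
Proof. induction l as [|[p s] l IH]; unfold Hs in *; simpl. ring. rewrite IH. ring. Qed.
Lemma tp_scale : forall w l b, tp (scale w l) b = w * tp l b.
Proof. induction l as [|[p s] l IH]; intros; unfold tp in *; simpl. ring. rewrite IH. ring. Qed.

Lemma Hs_bound : forall g C l, nonneg l -> (forall s, Rabs (g s) <= C) ->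
  Rabs (Hs g l) <= C * Hs (fun _ => 1) l.
Proof.
  induction l as [|[p s] l IH]; intros Hn Hg; unfold Hs in *; simpl.
  rewrite Rabs_R0. lra.
  inversion Hn; subst. simpl in H1.
  eapply Rle_trans. apply Rabs_triang. rewrite Rabs_mult, (Rabs_right p) by lra.
  specialize (IH H2 Hg). specialize (Hg s).
  assert (p * Rabs (g s) <= p * C) by (apply Rmult_le_compat_l; auto). lra.
Qed.

Lemma nonneg_mul : forall A B, nonneg A -> nonneg B -> nonneg (mul A B).
Proof.
  induction A as [|[p s] A IH]; intros B HA HB. constructor.
  inversion HA; subst. simpl in H1. unfold mul; simpl. apply List.Forall_app; split; [|apply IH; auto].
  induction HB as [|[q t] B Hq HB IHB]. constructor. simpl in *.
  constructor; simpl. apply Rmult_le_pos; [apply Rmult_le_pos|]; lra.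
  constructor; simpl. apply Rmult_le_pos; [apply Rmult_le_pos|]; lra. auto.
Qed.

Lemma Hs_const : forall c l, Hs (fun _ => c) l = c * Hs (fun _ => 1) l.
Proof. induction l as [|[p s] l IH]; unfold Hs in *; simpl. ring. rewrite IH. ring. Qed.

Lemma ws_mul : forall A B, Hs (fun _ => 1) (mul A B) = Hs (fun _ => 1) A * Hs (fun _ => 1) B.
Proof.
  intros. rewrite Hs_mul.
  rewrite (Hs_ext _ (fun _ => Hs (fun _ => 1) B)).
  rewrite Hs_const. ring.
  intros s. apply Hs_ext. intros; field.
Qed.

Lemma nonneg_scale : forall w l, 0 <= w -> nonneg l -> nonneg (scale w l).
Proof. intros w l Hw Hl. induction Hl; constructor; simpl; auto. apply Rmult_le_pos; auto. Qed.
Lemma nonneg_Dl : forall a m, nonneg (Dl a m).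
Proof. intros a m; revert a; induction m; intros; simpl. constructor. constructor. simpl; lra. apply IHm. Qed.
Lemma ws_Dl : forall a m, Hs (fun _ => 1) (Dl a m) = INR m.
Proof. intros a m; revert a; induction m; intros; simpl. reflexivity.
  unfold Hs in *; simpl. rewrite IHm. destruct m; simpl; ring. Qed.

Lemma Dl_sin : forall m a b, sin (b / 2) * tp (Dl a m) b =
  (sin (IZR (a + 1) * b / 2) - sin (IZR (a + 1 - 2 * Z.of_nat m) * b / 2)) / 2.
Proof.
  induction m; intros a b. simpl. unfold tp; simpl. replace (a + 1 - 0)%Z with (a+1)%Z by ring. lra.
  replace (tp (Dl a (S m)) b) with (cos (IZR a * b / 2) + tp (Dl (a - 2) m) b)
    by (unfold tp; simpl; ring).
  rewrite Rmult_plus_distr_l, IHm.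
  replace (a - 2 + 1 - 2 * Z.of_nat m)%Z with (a + 1 - 2 * Z.of_nat (S m))%Z by lia.
  rewrite !plus_IZR, !minus_IZR.
  replace ((IZR a + IZR 1) * b / 2) with (IZR a * b / 2 + b / 2) by (simpl; lra).
  replace ((IZR a - IZR 2 + IZR 1) * b / 2) with (IZR a * b / 2 - b / 2) by (simpl; lra).
  rewrite sin_plus, sin_minus. lra.
Qed.

Lemma Dl_tele : forall (g T : Z -> R), (forall x, g x = T x - T (x - 2)%Z) ->
  forall m a c, Hs (fun u => g (c + u)%Z) (Dl a m) = T (c + a)%Z - T (c + a - 2 * Z.of_nat m)%Z.
Proof.
  intros g T HT. induction m; intros a c. simpl. replace (c + a - 0)%Z with (c+a)%Z by ring.
  unfold Hs; simpl; ring.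
  replace (Hs (fun u => g (c + u)%Z) (Dl a (S m))) with (1 * g (c + a)%Z + Hs (fun u => g (c + u)%Z) (Dl (a - 2) m)) by reflexivity.
  rewrite IHm, HT.
  replace (c + (a - 2) - 2 * Z.of_nat m)%Z with (c + a - 2 * Z.of_nat (S m))%Z by lia.
  replace (c + (a - 2))%Z with (c + a - 2)%Z by ring. ring.
Qed.

Lemma is_RInt_cos : forall s, is_RInt (fun b => cos (IZR s * b / 2)) (- PI) PI (h s).
Proof.
  intros s. unfold h. destruct (Z.eq_dec s 0) as [->|Hs].
  - apply (is_RInt_ext (fun _ => 1)).
    + intros x _. simpl. replace (0 * x / 2) with 0 by lra. rewrite cos_0. reflexivity.
    + replace (2 * PI) with (scal (PI - - PI) 1). exact (@is_RInt_const R_NormedModule (- PI) PI 1).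
      unfold scal; simpl; unfold mult; simpl; ring.
  - assert (Hz : IZR s <> 0) by (apply not_0_IZR; auto).
    replace (4 * sin (IZR s * PI / 2) / IZR s) with
      (minus (2 * sin (IZR s * PI / 2) / IZR s) (2 * sin (IZR s * - PI / 2) / IZR s)).
    + apply (is_RInt_derive (fun b => 2 * sin (IZR s * b / 2) / IZR s)).
      * intros x _. auto_derive. auto.
        change (IZR s * x * / 2) with (IZR s * x / 2).
        set (u := IZR s) in *. set (v := cos (u * x / 2)). field. auto.
      * intros x _. apply (@ex_derive_continuous R_AbsRing R_NormedModule). auto_derive. auto.
    + unfold minus, plus, opp. simpl.
      replace (IZR s * - PI / 2) with (- (IZR s * PI / 2)) by lra. rewrite sin_neg.
      set (u := IZR s) in *. set (v := sin (u * PI / 2)). field. auto.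
Qed.

Lemma is_RInt_tp : forall l, is_RInt (tp l) (- PI) PI (Hs h l).
Proof.
  induction l as [|[p s] l IH].
  - replace (Hs h nil) with (scal (PI - - PI) 0) by (unfold scal; simpl; unfold mult; simpl; unfold Hs; simpl; ring).
    apply (is_RInt_ext (fun _ => 0)). intros; reflexivity.
    exact (@is_RInt_const R_NormedModule (- PI) PI 0).
  - apply (is_RInt_ext (fun b => plus (scal p (cos (IZR s * b / 2))) (tp l b))).
    + intros; reflexivity.
    + apply (is_RInt_plus _ _ _ _ (scal p (h s)) (Hs h l)); auto.
      apply (@is_RInt_scal R_NormedModule). apply is_RInt_cos.
Qed.

Lemma RInt_tp : forall l, RInt (tp l) (- PI) PI = Hs h l.
Proof. intros. apply is_RInt_unique, is_RInt_tp. Qed.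

Lemma RInt_split : forall f g : R -> R, ex_RInt g (- PI) PI ->
  (forall x, - PI < x < PI -> x <> 0 -> f x = g x) ->
  RInt f (- PI) PI = RInt g (- PI) PI.
Proof.
  intros f g Hg Hfg. pose proof PI_RGT_0.
  assert (G1 : ex_RInt g (- PI) 0) by (apply (ex_RInt_Chasles_1 (V:=R_CompleteNormedModule) g _ _ PI); auto; lra).
  assert (G2 : ex_RInt g 0 PI) by (apply (ex_RInt_Chasles_2 (V:=R_CompleteNormedModule) g (- PI)); auto; lra).
  assert (E1 : forall x, Rmin (- PI) 0 < x < Rmax (- PI) 0 -> g x = f x).
  { intros x Hx. rewrite Rmin_left, Rmax_right in Hx by lra. symmetry; apply Hfg; lra. }
  assert (E2 : forall x, Rmin 0 PI < x < Rmax 0 PI -> g x = f x).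
  { intros x Hx. rewrite Rmin_left, Rmax_right in Hx by lra. symmetry; apply Hfg; lra. }
  assert (F1 : ex_RInt f (- PI) 0) by (apply (ex_RInt_ext (V:=R_NormedModule) g); auto).
  assert (F2 : ex_RInt f 0 PI) by (apply (ex_RInt_ext (V:=R_NormedModule) g); auto).
  rewrite <- (RInt_Chasles (V:=R_CompleteNormedModule) f _ 0 _ F1 F2).
  rewrite <- (RInt_Chasles (V:=R_CompleteNormedModule) g _ 0 _ G1 G2).
  rewrite (RInt_ext (V:=R_CompleteNormedModule) f g (- PI) 0), (RInt_ext (V:=R_CompleteNormedModule) f g 0 PI); auto.
  intros; symmetry; auto. intros; symmetry; auto.
Qed.

Lemma sinDl : forall z b, (0 <= z)%Z ->
  sin (b / 2) * tp (Dl (z - 1) (Z.to_nat z)) b = sin (IZR z * b / 2).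
Proof.
  intros z b Hz. rewrite Dl_sin. rewrite Z2Nat.id by lia.
  replace (z - 1 + 1)%Z with z by ring. replace (z - 2 * z)%Z with (- z)%Z by ring.
  rewrite opp_IZR. replace (- IZR z * b / 2) with (- (IZR z * b / 2)) by lra.
  rewrite sin_neg. lra.
Qed.

Definition dlist (m : Z) := scale (/ IZR (Z.abs m)) (Dl (Z.abs m - 1) (Z.to_nat (Z.abs m))).
Definition dk (k : Z) := scale (IZR (Z.sgn k) / 2) (Dl (Z.abs k - 1) (Z.to_nat (Z.abs k))).

Lemma sin_sgn : forall k x, sin (IZR k * x) = IZR (Z.sgn k) * sin (IZR (Z.abs k) * x).
Proof.
  intros [|p|p] x; simpl.
  - replace (0 * x) with 0 by lra. rewrite sin_0. lra.
  - lra.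
  - rewrite <- Pos2Z.opp_pos, opp_IZR. replace (- IZR (Z.pos p) * x) with (- (IZR (Z.pos p) * x)) by lra.
    rewrite sin_neg. lra.
Qed.

Lemma dfac_tp : forall m b, m <> 0%Z -> sin (b / 2) <> 0 -> dfac m b = tp (dlist m) b.
Proof.
  intros m b Hm Hs. unfold dfac, dlist. rewrite tp_scale.
  assert (Ha : IZR (Z.abs m) <> 0) by (apply not_0_IZR; lia).
  assert (Hm' : IZR m <> 0) by (apply not_0_IZR; lia).
  pose proof (sinDl (Z.abs m) b (Z.abs_nonneg m)) as HD.
  set (T := tp (Dl (Z.abs m - 1) (Z.to_nat (Z.abs m))) b) in *.
  replace (IZR m * b / 2) with (IZR m * (b / 2)) by lra.
  rewrite sin_sgn. replace (IZR (Z.abs m) * (b / 2)) with (IZR (Z.abs m) * b / 2) by lra.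
  rewrite <- HD.
  assert (IZR m = IZR (Z.sgn m) * IZR (Z.abs m)) by (rewrite <- mult_IZR; f_equal; destruct m; simpl; auto).
  rewrite H. assert (IZR (Z.sgn m) <> 0) by (apply not_0_IZR; destruct m; simpl; lia).
  set (u := IZR (Z.sgn m)) in *. set (v := IZR (Z.abs m)) in *. set (w := sin (b/2)) in *.
  field. auto.
Qed.

Lemma dk_tp : forall k b, sin (b / 2) <> 0 -> sin (IZR k * b / 2) / (2 * sin (b / 2)) = tp (dk k) b.
Proof.
  intros k b Hs. unfold dk. rewrite tp_scale.
  pose proof (sinDl (Z.abs k) b (Z.abs_nonneg k)) as HD.
  set (T := tp (Dl (Z.abs k - 1) (Z.to_nat (Z.abs k))) b) in *.
  replace (IZR k * b / 2) with (IZR k * (b / 2)) by lra.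
  rewrite sin_sgn. replace (IZR (Z.abs k) * (b / 2)) with (IZR (Z.abs k) * b / 2) by lra.
  rewrite <- HD. set (u := IZR (Z.sgn k)) in *. set (w := sin (b/2)) in *. field. auto.
Qed.

Lemma ws_dlist : forall m, m <> 0%Z -> Hs (fun _ => 1) (dlist m) = 1.
Proof.
  intros m Hm. unfold dlist. rewrite Hs_scale, ws_Dl.
  rewrite INR_IZR_INZ, Z2Nat.id by lia. field. apply not_0_IZR; lia.
Qed.

Lemma nonneg_dlist : forall m, nonneg (dlist m).
Proof.
  intros m. apply nonneg_scale. 2: apply nonneg_Dl.
  destruct (Z.eq_dec m 0). subst. simpl. rewrite Rinv_0. lra.
  apply Rlt_le, Rinv_0_lt_compat. apply IZR_lt. lia.
Qed.

Fixpoint Phi (ks : nat -> Z) (n : nat) : list (R * Z) :=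
  match n with O => dlist (ks O) | S n' => mul (Phi ks n') (dlist (ks (S n'))) end.

Lemma Phi_tp : forall ks n b, (forall j, (j <= n)%nat -> ks j <> 0%Z) -> sin (b / 2) <> 0 ->
  prod_upto (fun j => dfac (ks j) b) n = tp (Phi ks n) b.
Proof.
  intros ks n b Hk Hs. induction n; simpl.
  - apply dfac_tp; auto.
  - rewrite tp_mul, IHn, dfac_tp; auto.
Qed.

Lemma Phi_conv : forall ks n, (forall j, (j <= n)%nat -> ks j <> 0%Z) ->
  nonneg (Phi ks n) /\ Hs (fun _ => 1) (Phi ks n) = 1.
Proof.
  intros ks n Hk. induction n; simpl.
  - split. apply nonneg_dlist. apply ws_dlist; auto.
  - destruct IHn as [A B]; auto. split. apply nonneg_mul; auto. apply nonneg_dlist.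
    rewrite ws_mul, B, ws_dlist; auto. ring.
Qed.

Lemma inner_bound : forall (g T : Z -> R) C, (forall x, g x = T x - T (x - 2)%Z) ->
  (forall x, g (- x)%Z = g x) -> (forall x, Rabs (T x) <= C) ->
  forall k s, Rabs (Hs (fun t => (g (s + t)%Z + g (s - t)%Z) / 2) (dk k)) <= C.
Proof.
  intros g T C HT Hev HC k s. unfold dk. rewrite Hs_scale.
  rewrite (Hs_ext _ (fun t => /2 * g (s + t)%Z + /2 * g (- s + t)%Z)).
  2:{ intros t. rewrite <- (Hev (s - t)%Z). replace (- (s - t))%Z with (- s + t)%Z by ring. field. }
  rewrite Hs_lin. rewrite !(Dl_tele g T HT).
  assert (Hw : Rabs (IZR (Z.sgn k) / 2) <= /2).
  { destruct k; simpl; unfold Rdiv; rewrite ?Rmult_0_l, ?Rabs_R0, ?Rmult_1_l; try lra;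
    [rewrite Rabs_right| rewrite Rabs_left]; lra. }
  rewrite Rabs_mult.
  set (X := / 2 * (T (s + (Z.abs k - 1))%Z - T (s + (Z.abs k - 1) - 2 * Z.of_nat (Z.to_nat (Z.abs k)))%Z) +
     / 2 * (T (- s + (Z.abs k - 1))%Z - T (- s + (Z.abs k - 1) - 2 * Z.of_nat (Z.to_nat (Z.abs k)))%Z)).
  assert (Rabs X <= 2 * C).
  { unfold X. pose proof (HC (s + (Z.abs k - 1))%Z). pose proof (HC (s + (Z.abs k - 1) - 2 * Z.of_nat (Z.to_nat (Z.abs k)))%Z).
    pose proof (HC (- s + (Z.abs k - 1))%Z). pose proof (HC (- s + (Z.abs k - 1) - 2 * Z.of_nat (Z.to_nat (Z.abs k)))%Z).
    revert H H0 H1 H2. generalize (T (s + (Z.abs k - 1))%Z) (T (s + (Z.abs k - 1) - 2 * Z.of_nat (Z.to_nat (Z.abs k)))%Z)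
      (T (- s + (Z.abs k - 1))%Z) (T (- s + (Z.abs k - 1) - 2 * Z.of_nat (Z.to_nat (Z.abs k)))%Z).
    intros r1 r2 r3 r4 H1 H2 H3 H4. unfold Rabs in *.
    repeat match goal with |- context [Rcase_abs ?x] => destruct (Rcase_abs x) end;
    repeat match goal with H : context [Rcase_abs ?x] |- _ => destruct (Rcase_abs x) end; lra. }
  pose proof (Rabs_pos X). pose proof (Rabs_pos (IZR (Z.sgn k) / 2)).
  assert (Rabs (IZR (Z.sgn k) / 2) * Rabs X <= /2 * (2 * C)) by (apply Rmult_le_compat; auto).
  lra.
Qed.

Lemma sin_half_nz : forall b, - PI < b < PI -> b <> 0 -> sin (b / 2) <> 0.
Proof.
  intros b Hb H0. destruct (Rlt_dec 0 b).
  - pose proof (sin_gt_0 (b/2)). lra.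
  - replace (b / 2) with (- (- b / 2)) by lra. rewrite sin_neg.
    pose proof (sin_gt_0 (- b/2)). assert (0 < sin (- b / 2)) by (apply H; lra). lra.
Qed.

Theorem lemma3p1 (n : nat) (k : Z) (ks : nat -> Z)
  (Hks : forall j : nat, (j <= n)%nat -> ks j <> 0%Z) :
  Rabs (RInt (fun b => sin (IZR k * b / 2) / (2 * sin (b / 2))
                       * prod_upto (fun j => dfac (ks j) b) n) (- PI) PI) <= 4
  /\
  Rabs (RInt (fun b => cos (b / 2) * sin (IZR k * b / 2) / (2 * sin (b / 2))
                       * prod_upto (fun j => dfac (ks j) b) n) (- PI) PI) <= 10 / 3.
Proof.
  destruct (Phi_conv ks n Hks) as [Hnn Hws].
  split.
  - rewrite (RInt_split _ (tp (mul (Phi ks n) (dk k)))).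
    2:{ exists (Hs h (mul (Phi ks n) (dk k))). apply is_RInt_tp. }
    2:{ intros x Hx H0. pose proof (sin_half_nz x Hx H0). rewrite tp_mul, dk_tp, Phi_tp; auto. ring. }
    rewrite RInt_tp, Hs_mul.
    replace 4 with (4 * Hs (fun _ => 1) (Phi ks n)) by (rewrite Hws; ring).
    apply Hs_bound; auto. intros s.
    apply (inner_bound h F 4 (fun x => eq_sym (F_step x)) h_even F_bound).
  - set (C1 := (1, 1%Z) :: nil).
    rewrite (RInt_split _ (tp (mul (mul (Phi ks n) (dk k)) C1))).
    2:{ exists (Hs h (mul (mul (Phi ks n) (dk k)) C1)). apply is_RInt_tp. }
    2:{ intros x Hx H0. pose proof (sin_half_nz x Hx H0). rewrite !tp_mul, <- dk_tp, Phi_tp; auto.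
        unfold C1, tp. simpl. replace (1 * x / 2) with (x / 2) by lra.
        set (w := sin (x / 2)) in *. field. auto. }
    rewrite RInt_tp, Hs_mul.
    set (h1 := fun s => (h (s + 1)%Z + h (s - 1)%Z) / 2).
    rewrite (Hs_ext _ h1).
    2:{ intros s. unfold C1, Hs, h1. simpl. ring. }
    rewrite Hs_mul.
    replace (10/3) with (10/3 * Hs (fun _ => 1) (Phi ks n)) by (rewrite Hws; ring).
    apply Hs_bound; auto. intros s.
    apply (inner_bound h1 (fun x => E x / 2) (10/3)).
    + intros x. unfold h1. rewrite <- (E_step x). field.
    + intros x. unfold h1. rewrite <- (h_even (- x + 1)), <- (h_even (- x - 1)).
      replace (- (- x + 1))%Z with (x - 1)%Z by ring. replace (- (- x - 1))%Z with (x + 1)%Z by ring. lra.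
    + intros x. pose proof (E_bound x). unfold Rdiv. rewrite Rabs_mult, (Rabs_right (/2)) by lra. lra.
Qed.
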